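(* Let $H$ be a reduced double-well type potential, $\beta>0$, and $\mu_\beta$ its Gibbs measure. Then \begin{enumerate} \item $\mu_\beta[01]=\mu_\beta[10]$; \item $\frac{\mu_\beta[0^n1]}{\mu_\beta[01]}=\Big[\sum_{k\ge n}\lambda_\beta^{-k}e^{-\beta H_k^1}\Big]F_\beta^0(\lambda_\beta)$ for $n\ge1$, and $\frac{\mu_\beta[0]}{\mu_\beta[01]}=\frac{\tilde F_\beta^1(\lambda_\beta)}{F_\beta^1(\lambda_\beta)}$; \item $\frac{\mu_\beta[1^n0]}{\mu_\beta[10]}=\Big[\sum_{k\ge n}\lambda_\beta^{-k}e^{-\beta H_k^0}\Big]F_\beta^1(\lambda_\beta)$ for $n\ge1$, and $\frac{\mu_\beta[1]}{\mu_\beta[10]}=\frac{\tilde F_\beta^0(\lambda_\beta)}{F_\beta^0(\lambda_\beta)}$; \item $\frac{\mu_\beta[01^n0]}{\mu_\beta[10]}=\frac{e^{-\beta H_n^0}F_\beta^1(\lambda_\beta)}{\lambda_\beta^n}$ and $\frac{\mu_\beta[10^n1]}{\mu_\beta[01]}=\frac{e^{-\beta H_n^1}F_\beta^0(\lambda_\beta)}{\lambda_\beta^n}$; \item $\frac{\mu_\beta[0]}{\mu_\beta[1]}=\frac{F_\beta^0(\lambda_\beta)}{F_\beta^1(\lambda_\beta)}\cdot\frac{\tilde F_\beta^1(\lambda_\beta)}{\tilde F_\beta^0(\lambda_\beta)}$. \end{enumerate}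
   Context: $\Sigma:=\{0,1\}^{\mathbb N}$, $\sigma$ the left shift. A reduced double-well type potential is a continuous nonnegative $H:\Sigma\to\mathbb R$ with summable variation such that $H=0$ on $[00]\cup[11]$, $H=H_n^0>0$ on $[01^n0]$, $H=H_n^1>0$ on $[10^n1]$ ($n\ge1$), and $\sum_{k\ge1}\sup_{n\ge0}|H_k^i-H_{k+n}^i|<\infty$ ($i=0,1$). $\mathcal L_\beta[\Phi](x)=e^{-\beta H(0x)}\Phi(0x)+e^{-\beta H(1x)}\Phi(1x)$; $\Phi_\beta$ the unique positive continuous eigenfunction with $\max\Phi_\beta=1$, $\lambda_\beta$ its eigenvalue, $\nu_\beta$ the unique probability with $\mathcal L_\beta^*\nu_\beta=\lambda_\beta\nu_\beta$; Gibbs measure $\mu_\beta:=\Phi_\beta\nu_\beta/\int\Phi_\beta d\nu_\beta$. $F_\beta^i(\lambda):=\sum_{k\ge1}\lambda^{-k}e^{-\beta H_k^i}$, $\tilde F_\beta^i(\lambda):=\sum_{k\ge1}k\lambda^{-k}e^{-\beta H_k^i}$ ($i=0,1$). *)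

(* Defs.v *)
From Stdlib Require Import Reals Lra Lia List.
Import ListNotations.
Open Scope R_scope.

(* Sigma = {0,1}^N, with 0 = false, 1 = true. *)
Definition Sigma := nat -> bool.

Definition scons (b : bool) (x : Sigma) : Sigma :=
  fun n => match n with O => b | S k => x k end.

Definition agree (n : nat) (x y : Sigma) : Prop :=
  forall i, (i < n)%nat -> x i = y i.

Definition continuous_S (f : Sigma -> R) : Prop :=
  forall x eps, 0 < eps -> exists N, forall y, agree N x y -> Rabs (f y - f x) < eps.

Definition is_var (f : Sigma -> R) (n : nat) (v : R) : Prop :=
  is_lub (fun r => exists x y, agree n x y /\ r = Rabs (f x - f y)) v.

Definition summable_variation (f : Sigma -> R) : Prop :=
  exists v : nat -> R, (forall n, is_var f n (v n)) /\
    exists l, infinite_sum (fun n => v (S n)) l.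

Definition word := list bool.

Definition in_cyl (w : word) (x : Sigma) : Prop :=
  forall i, (i < length w)%nat -> x i = nth i w false.

Definition in_cylb (w : word) (x : Sigma) : bool :=
  let fix go (w : word) (i : nat) : bool :=
    match w with
    | nil => true
    | b :: w' => andb (Bool.eqb (x i) b) (go w' (S i))
    end in go w O.

Definition cyl_ind (w : word) (x : Sigma) : R := if in_cylb w x then 1 else 0.

Definition in_01n0 (n : nat) (x : Sigma) : Prop :=
  in_cyl (false :: repeat true n ++ [false]) x.
Definition in_10n1 (n : nat) (x : Sigma) : Prop :=
  in_cyl (true :: repeat false n ++ [true]) x.

Definition is_tail_osc (h : nat -> R) (k : nat) (d : R) : Prop :=
  is_lub (fun r => exists n, r = Rabs (h k - h (k + n)%nat)) d.

Definition tail_summable (h : nat -> R) : Prop :=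
  exists d : nat -> R, (forall k, is_tail_osc h k (d k)) /\
    exists l, infinite_sum (fun k => d (S k)) l.

Definition reduced_double_well (H : Sigma -> R) (H0 H1 : nat -> R) : Prop :=
  continuous_S H /\
  (forall x, 0 <= H x) /\
  summable_variation H /\
  (forall x, x 0%nat = x 1%nat -> H x = 0) /\
  (forall n x, (1 <= n)%nat -> in_01n0 n x -> H x = H0 n) /\
  (forall n x, (1 <= n)%nat -> in_10n1 n x -> H x = H1 n) /\
  (forall n, (1 <= n)%nat -> 0 < H0 n) /\
  (forall n, (1 <= n)%nat -> 0 < H1 n) /\
  tail_summable H0 /\ tail_summable H1.

Definition transfer (beta : R) (H : Sigma -> R) (Phi : Sigma -> R) (x : Sigma) : R :=
  exp (- beta * H (scons false x)) * Phi (scons false x)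
  + exp (- beta * H (scons true x)) * Phi (scons true x).

(* Borel probability measures on Sigma are represented by their (Kolmogorov
   consistent) values on cylinder sets: m w = measure of [w]. *)
Definition prob_on_cyl (m : word -> R) : Prop :=
  m nil = 1 /\ (forall w, 0 <= m w) /\
  (forall w, m w = m (w ++ [false]) + m (w ++ [true])).

Fixpoint words (n : nat) : list word :=
  match n with
  | O => [nil]
  | S k => map (cons false) (words k) ++ map (cons true) (words k)
  end.

Definition ext (w : word) : Sigma := fun i => nth i w false.

Definition riemann_sum (m : word -> R) (f : Sigma -> R) (n : nat) : R :=
  fold_right Rplus 0 (map (fun w => f (ext w) * m w) (words n)).

(* integral of a continuous f w.r.t. m: limit of the Riemann sums over
   cylinders of length n *)
Definition is_integral (m : word -> R) (f : Sigma -> R) (I : R) : Prop :=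
  Un_cv (riemann_sum m f) I.

Definition is_eigenfunction (beta : R) (H : Sigma -> R) (lam : R) (Phi : Sigma -> R) : Prop :=
  continuous_S Phi /\ (forall x, 0 < Phi x) /\
  (forall x, Phi x <= 1) /\ (exists x, Phi x = 1) /\
  (forall x, transfer beta H Phi x = lam * Phi x).

(* nu probability with L_beta^* nu = lambda nu *)
Definition is_eigenmeasure (beta : R) (H : Sigma -> R) (lam : R) (nu : word -> R) : Prop :=
  prob_on_cyl nu /\
  forall g, continuous_S g -> forall I, is_integral nu g I ->
    is_integral nu (transfer beta H g) (lam * I).

Definition is_gibbs_cyl (nu : word -> R) (Phi : Sigma -> R) (mu : word -> R) : Prop :=
  exists Z, is_integral nu Phi Z /\
    forall w, exists Iw, is_integral nu (fun x => Phi x * cyl_ind w x) Iw /\ mu w = Iw / Z.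

Definition Fterm (beta lam : R) (h : nat -> R) (k : nat) : R :=
  / lam ^ k * exp (- beta * h k).
Definition tFterm (beta lam : R) (h : nat -> R) (k : nat) : R :=
  INR k * / lam ^ k * exp (- beta * h k).

(* Main.v *)
Require Import Defs.
From Stdlib Require Import Reals Lra Lia List FunctionalExtensionality Classical ClassicalEpsilon.
Import ListNotations.
Open Scope R_scope.

Fixpoint fsum (f : nat -> R) (n : nat) : R :=
  match n with O => 0 | S k => fsum f k + f k end.
Definition ser (f : nat -> R) (l : R) := Un_cv (fun n => fsum f n) l.

Lemma fsum_sum_f_R0 f n : fsum f (S n) = sum_f_R0 f n.
Proof. induction n; simpl in *; [lra| rewrite <- IHn; simpl; lra]. Qed.

Lemma ser_infinite f l : ser f l -> infinite_sum f l.
Proof.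
  intros Hs eps Heps; destruct (Hs eps Heps) as [N HN]; exists N; intros n Hn.
  rewrite <- fsum_sum_f_R0; apply HN; lia.
Qed.

Lemma Un_cv_ext u v l : (forall n, u n = v n) -> Un_cv u l -> Un_cv v l.
Proof.
  intros E Hu eps He; destruct (Hu eps He) as [N HN]; exists N; intros n Hn; rewrite <- E; auto.
Qed.

Lemma Un_cv_const c : Un_cv (fun _ => c) c.
Proof. intros eps He; exists O; intros; unfold R_dist; rewrite Rminus_diag, Rabs_R0; lra. Qed.

Lemma Un_cv_scal u l c : Un_cv u l -> Un_cv (fun n => c * u n) (c * l).
Proof. intros; apply CV_mult; auto; apply Un_cv_const. Qed.

Lemma Un_cv_squeeze0 u v : (forall n, 0 <= u n <= v n) -> Un_cv v 0 -> Un_cv u 0.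
Proof.
  intros Hb Hv eps He; destruct (Hv eps He) as [N HN]; exists N; intros n Hn.
  specialize (HN n Hn); specialize (Hb n); unfold R_dist in *.
  rewrite Rminus_0_r in *; rewrite Rabs_right in *; lra.
Qed.

Lemma Un_cv_tail u l N : Un_cv u l -> Un_cv (fun n => u (N + n)%nat) l.
Proof.
  intros Hu eps He; destruct (Hu eps He) as [M HM]; exists M; intros n Hn; apply HM; lia.
Qed.

Lemma abs_small_0 (l : R) : (forall eps, 0 < eps -> Rabs l < eps) -> l = 0.
Proof.
  intros Hl. destruct (Req_dec l 0) as [|Hn]; auto.
  specialize (Hl (Rabs l) (Rabs_pos_lt _ Hn)); lra.
Qed.

Lemma pow_inv_cv0 lam : 1 < lam -> Un_cv (fun n => / lam ^ n) 0.
Proof.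
  intros Hl eps He.
  assert (Hr : Rabs (/ lam) < 1).
  { rewrite Rabs_right. apply (Rmult_lt_reg_l lam); [lra|]. rewrite Rinv_r; lra.
    left; apply Rinv_0_lt_compat; lra. }
  destruct (pow_lt_1_zero _ Hr eps He) as [N HN]; exists N; intros n Hn.
  unfold R_dist; rewrite Rminus_0_r, <- pow_inv; auto.
Qed.

Lemma fsum_ext f g n : (forall i, f i = g i) -> fsum f n = fsum g n.
Proof. intros E; induction n; simpl; [auto| rewrite IHn, E; auto]. Qed.
Lemma fsum_plus f g n : fsum (fun i => f i + g i) n = fsum f n + fsum g n.
Proof. induction n; simpl; lra. Qed.
Lemma fsum_minus f g n : fsum (fun i => f i - g i) n = fsum f n - fsum g n.
Proof. induction n; simpl; lra. Qed.
Lemma fsum_scal c f n : fsum (fun i => c * f i) n = c * fsum f n.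
Proof. induction n; simpl; lra. Qed.
Lemma fsum_le f g n : (forall i, f i <= g i) -> fsum f n <= fsum g n.
Proof. intros E; induction n; simpl; [lra| specialize (E n); lra]. Qed.
Lemma fsum_nonneg f n : (forall i, 0 <= f i) -> 0 <= fsum f n.
Proof. intros E; induction n; simpl; [lra| specialize (E n); lra]. Qed.
Lemma fsum_mono f n m : (forall i, 0 <= f i) -> (n <= m)%nat -> fsum f n <= fsum f m.
Proof. intros E Hnm; induction Hnm; simpl; [lra| specialize (E m); lra]. Qed.
Lemma fsum_lin f d n : (forall i, d <= f i) -> INR n * d <= fsum f n.
Proof. intros E; induction n; [simpl; lra|]; rewrite S_INR; simpl; specialize (E n); lra. Qed.
Lemma fsum_shift f N n : fsum f (N + n) = fsum f N + fsum (fun j => f (N + j)%nat) n.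
Proof. induction n; simpl; [rewrite Nat.add_0_r; lra| rewrite Nat.add_succ_r; simpl; lra]. Qed.
Lemma fsum_cons f n : fsum f (S n) = f O + fsum (fun j => f (S j)) n.
Proof. induction n; simpl in *; lra. Qed.

Lemma ser_ext f g l : (forall i, f i = g i) -> ser f l -> ser g l.
Proof. intros E; apply Un_cv_ext; intros; apply fsum_ext; auto. Qed.
Lemma ser_unique f l1 l2 : ser f l1 -> ser f l2 -> l1 = l2.
Proof. apply UL_sequence. Qed.
Lemma ser_scal c f l : ser f l -> ser (fun i => c * f i) (c * l).
Proof. intros Hs; eapply Un_cv_ext; [|apply Un_cv_scal, Hs]; intros; simpl; rewrite fsum_scal; auto. Qed.
Lemma ser_plus f g l1 l2 : ser f l1 -> ser g l2 -> ser (fun i => f i + g i) (l1 + l2).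
Proof. intros A B; eapply Un_cv_ext; [|apply CV_plus; [apply A|apply B]]; intros; simpl; rewrite fsum_plus; auto. Qed.
Lemma ser_minus f g l1 l2 : ser f l1 -> ser g l2 -> ser (fun i => f i - g i) (l1 - l2).
Proof. intros A B; eapply Un_cv_ext; [|apply CV_minus; [apply A|apply B]]; intros; simpl; rewrite fsum_minus; auto. Qed.
Lemma ser_le f g l1 l2 : (forall i, f i <= g i) -> ser f l1 -> ser g l2 -> l1 <= l2.
Proof. intros E A B; eapply Rle_cv_lim; [|apply A|apply B]; intros; apply fsum_le; auto. Qed.


Lemma ser_partial_le f l : (forall i, 0 <= f i) -> ser f l -> forall n, fsum f n <= l.
Proof.
  intros E A n; apply (growing_ineq (fun n => fsum f n)); auto.
  intros k; simpl; specialize (E k); lra.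
Qed.
Lemma ser_nonneg f l : (forall i, 0 <= f i) -> ser f l -> 0 <= l.
Proof. intros E A; apply (Rle_trans _ (fsum f O)); [simpl; lra| apply ser_partial_le; auto]. Qed.
Lemma ser_pos f l : (forall i, 0 <= f i) -> 0 < f O -> ser f l -> 0 < l.
Proof. intros E P A; apply (Rlt_le_trans _ (fsum f 1)); [simpl; lra| apply ser_partial_le; auto]. Qed.
Lemma ser_zero_terms f : (forall i, 0 <= f i) -> ser f 0 -> forall i, f i = 0.
Proof.
  intros E A i. pose proof (ser_partial_le f 0 E A (S i)) as Hp; simpl in Hp.
  pose proof (fsum_nonneg f i E); specialize (E i); lra.
Qed.
Lemma ser_bounded f M : (forall i, 0 <= f i) -> (forall n, fsum f n <= M) -> exists l, ser f l.
Proof.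
  intros E B. destruct (growing_cv (fun n => fsum f n)) as [l Hl].
  - intros n; simpl; specialize (E n); lra.
  - exists M; intros x [n ->]; auto.
  - exists l; exact Hl.
Qed.
Lemma Un_cv_S u l : Un_cv (fun n => u (S n)) l -> Un_cv u l.
Proof. intros A eps He; destruct (A eps He) as [N HN]; exists (S N); intros [|n] Hn; [lia|]; apply HN; lia. Qed.
Lemma ser_cons f l : ser (fun j => f (S j)) l -> ser f (f O + l).
Proof.
  intros A. apply Un_cv_S. eapply Un_cv_ext; [|apply CV_plus; [apply Un_cv_const| apply A]].
  intros n; cbv beta; rewrite (fsum_cons f n); auto.
Qed.
Lemma ser_tail f l N : ser f l -> ser (fun j => f (N + j)%nat) (l - fsum f N).
Proof.
  intros A. apply (Un_cv_ext (fun n => fsum f (N + n) - fsum f N)).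
  - intros n; rewrite fsum_shift; ring.
  - apply CV_minus; [apply (Un_cv_tail _ _ N A)| apply Un_cv_const].
Qed.

Lemma double_sum (b T : nat -> R) (P : R) :
  (forall k, 0 <= b k) -> (forall n, ser (fun j => b (n + j)%nat) (T n)) -> ser T P ->
  ser (fun k => INR (S k) * b k) P.
Proof.
  intros Hb HT HP.
  assert (Tnn : forall n, 0 <= T n) by (intros n; apply (ser_nonneg _ _ (fun j => Hb _) (HT n))).
  assert (Trec : forall n, T n = b n + T (S n)).
  { intros n. apply (ser_unique (fun j => b (n + j)%nat)); [apply HT|].
    pose proof (ser_cons (fun j => b (n+j)%nat) (T (S n))) as Hc. cbv beta in Hc.
    rewrite Nat.add_0_r in Hc. apply Hc. eapply ser_ext; [|apply (HT (S n))].
    intros j; simpl; f_equal; lia. }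
  assert (Id : forall N, fsum T N = fsum (fun k => INR (S k) * b k) N + INR N * T N).
  { induction N; [simpl; lra|]. change (fsum T (S N)) with (fsum T N + T N).
    change (fsum (fun k => INR (S k) * b k) (S N)) with (fsum (fun k => INR (S k) * b k) N + INR (S N) * b N).
    rewrite IHN, (Trec N). rewrite S_INR. ring. }
  assert (Qb : forall N, fsum (fun k => INR (S k) * b k) N <= P).
  { intros N. pose proof (Id N). pose proof (ser_partial_le T P Tnn HP N).
    pose proof (pos_INR N); pose proof (Tnn N). nra. }
  assert (Qnn : forall k, 0 <= INR (S k) * b k).
  { intros k; pose proof (pos_INR (S k)); pose proof (Hb k); nra. }
  destruct (ser_bounded _ P Qnn Qb) as [Qs HQ].
  assert (R0: Un_cv (fun N => INR N * T N) 0).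
  { apply (Un_cv_squeeze0 _ (fun N => Qs - fsum (fun k => INR (S k) * b k) N)).
    - intros N; split; [pose proof (pos_INR N); pose proof (Tnn N); nra|].
      pose proof (ser_tail _ _ N HQ) as Ht.
      pose proof (ser_scal (INR N) _ _ (HT N)) as Hs.
      eapply ser_le; [|apply Hs|apply Ht]. intros j; cbv beta.
      apply Rmult_le_compat_r; [apply Hb|]. apply le_INR; lia.
    - replace 0 with (Qs - Qs) by ring. apply CV_minus; [apply Un_cv_const| apply HQ]. }
  unfold ser. apply (Un_cv_ext (fun N => fsum T N - INR N * T N)).
  - intros N; rewrite Id; ring.
  - replace P with (P - 0) by ring. apply CV_minus; auto.
Qed.


Fixpoint papp (w : word) (x : Sigma) : Sigma :=
  match w with nil => x | b :: w' => scons b (papp w' x) end.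
Definition shiftn (n : nat) (x : Sigma) : Sigma := fun i => x (n + i)%nat.
Fixpoint pref (n : nat) (x : Sigma) : word :=
  match n with O => nil | S k => x O :: pref k (shiftn 1 x) end.

Lemma app_app w1 w2 x : papp (w1 ++ w2) x = papp w1 (papp w2 x).
Proof. induction w1; simpl; [auto| rewrite IHw1; auto]. Qed.

Lemma app_lt w x i : (i < length w)%nat -> papp w x i = nth i w false.
Proof.
  revert i; induction w as [|b w IH]; simpl; intros i Hi; [lia|].
  destruct i; simpl; auto. apply IH; lia.
Qed.

Lemma in_cyl_app w x : in_cyl w (papp w x).
Proof. intros i Hi; apply app_lt; auto. Qed.

Lemma agree_pref n x y : agree n x (papp (pref n x) y).
Proof.
  revert x; induction n; intros x i Hi; [lia|].
  destruct i; simpl; auto. rewrite <- (IHn (shiftn 1 x) i); [auto|lia].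
Qed.

Lemma agree_mono n m x y : (n <= m)%nat -> agree m x y -> agree n x y.
Proof. intros Hnm A i Hi; apply A; lia. Qed.

Lemma in_cyl_decomp w x : in_cyl w x -> x = papp w (shiftn (length w) x).
Proof.
  revert x; induction w as [|b w IH]; intros x Hx; simpl.
  - extensionality i; reflexivity.
  - assert (Hx0 : x O = b) by (apply (Hx O); simpl; lia).
    assert (Hx1 : in_cyl w (shiftn 1 x)).
    { intros i Hi; apply (Hx (S i)); simpl; lia. }
    pose proof (IH _ Hx1) as E.
    assert (E2 : shiftn (length w) (shiftn 1 x) = shiftn (S (length w)) x).
    { extensionality k; unfold shiftn; f_equal; lia. }
    rewrite E2 in E. rewrite <- E.
    extensionality i; destruct i; simpl; auto.
Qed.

Lemma in_cyl_cons b w x : in_cyl (b :: w) x <-> x O = b /\ in_cyl w (shiftn 1 x).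
Proof.
  split.
  - intros Hx; split; [apply (Hx O); simpl; lia|]. intros i Hi; apply (Hx (S i)); simpl; lia.
  - intros [H0 H1] [|i] Hi; simpl; auto. apply H1; simpl in Hi; lia.
Qed.

Lemma in_cyl_scons b c w x : in_cyl (b :: w) (scons c x) <-> c = b /\ in_cyl w x.
Proof.
  split.
  - intros Hx; split; [apply (Hx O); simpl; lia|]. intros i Hi; apply (Hx (S i)); simpl; lia.
  - intros [H0 H1] [|i] Hi; simpl; auto. apply H1; simpl in Hi; lia.
Qed.

Lemma in_cyl_prefix w1 w2 x : in_cyl (w1 ++ w2) x -> in_cyl w1 x.
Proof.
  intros Hx i Hi. rewrite Hx by (rewrite length_app; lia). apply app_nth1; auto.
Qed.

Lemma in_cyl_ext w x y : (forall i, x i = y i) -> in_cyl w x -> in_cyl w y.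
Proof. intros E Hx i Hi; rewrite <- E; auto. Qed.

Lemma in_cyl_agree w x y : agree (length w) x y -> in_cyl w x -> in_cyl w y.
Proof. intros E Hx i Hi; rewrite <- E; auto. Qed.

Fixpoint goB (x : Sigma) (w : word) (i : nat) : bool :=
  match w with nil => true | b :: w' => andb (Bool.eqb (x i) b) (goB x w' (S i)) end.

Lemma in_cylb_goB w x : in_cylb w x = goB x w O.
Proof.
  unfold in_cylb. generalize O. induction w; simpl; intros; [auto| rewrite IHw; auto].
Qed.

Lemma goB_spec x w i : goB x w i = true <-> forall k, (k < length w)%nat -> x (i + k)%nat = nth k w false.
Proof.
  revert i; induction w as [|b w IH]; simpl; intros i; split.
  - intros; lia.
  - auto.
  - intros Hb. apply Bool.andb_true_iff in Hb as [E1 E2]. apply Bool.eqb_prop in E1.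
    intros [|k] Hk; [rewrite Nat.add_0_r; auto|]. 
    apply IH with (k := k) in E2; [|lia]. rewrite <- E2; f_equal; lia.
  - intros Hk. apply Bool.andb_true_iff; split.
    + apply Bool.eqb_true_iff. specialize (Hk O ltac:(lia)). rewrite Nat.add_0_r in Hk; auto.
    + apply IH. intros k Hk'. specialize (Hk (S k) ltac:(lia)). rewrite <- Hk; f_equal; lia.
Qed.

Lemma in_cylb_spec w x : in_cylb w x = true <-> in_cyl w x.
Proof. rewrite in_cylb_goB, goB_spec. unfold in_cyl; split; intros Hk k Hkl; auto. apply Hk; auto. Qed.

Lemma cyl_ind_1 w x : in_cyl w x -> cyl_ind w x = 1.
Proof. intros Hx; unfold cyl_ind; apply in_cylb_spec in Hx; rewrite Hx; auto. Qed.
Lemma cyl_ind_0 w x : ~ in_cyl w x -> cyl_ind w x = 0.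
Proof.
  intros Hx; unfold cyl_ind; destruct (in_cylb w x) eqn:E; auto.
  apply in_cylb_spec in E; contradiction.
Qed.
Lemma cyl_ind_01 w x : 0 <= cyl_ind w x <= 1.
Proof. unfold cyl_ind; destruct (in_cylb w x); lra. Qed.

Lemma cyl_ind_scons b c w x : cyl_ind (b :: w) (scons c x) = if Bool.eqb c b then cyl_ind w x else 0.
Proof.
  destruct (classic (in_cyl w x)) as [Hx|Hx]; destruct (Bool.eqb c b) eqn:E.
  - apply Bool.eqb_prop in E; subst. rewrite !cyl_ind_1; auto. apply in_cyl_scons; auto.
  - apply cyl_ind_0. rewrite in_cyl_scons. intros [-> _]. rewrite Bool.eqb_reflx in E; discriminate.
  - apply Bool.eqb_prop in E; subst. rewrite !cyl_ind_0; auto. rewrite in_cyl_scons; tauto.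
  - apply cyl_ind_0. rewrite in_cyl_scons. tauto.
Qed.

Lemma cyl_ind_agree w x y : agree (length w) x y -> cyl_ind w x = cyl_ind w y.
Proof.
  intros A. destruct (classic (in_cyl w x)) as [Hx|Hx].
  - rewrite !cyl_ind_1; auto. eapply in_cyl_agree; eauto.
  - rewrite !cyl_ind_0; auto. intros Hy; apply Hx. eapply in_cyl_agree; [|apply Hy].
    intros i Hi; symmetry; auto.
Qed.

Lemma cyl_ind_snoc w x : cyl_ind w x = cyl_ind (w ++ [false]) x + cyl_ind (w ++ [true]) x.
Proof.
  destruct (classic (in_cyl w x)) as [Hx|Hx].
  - rewrite (cyl_ind_1 w); auto. destruct (x (length w)) eqn:E.
    + rewrite (cyl_ind_0 (w ++ [false])), (cyl_ind_1 (w ++ [true])); [lra| |].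
      * intros i Hi. rewrite length_app in Hi; simpl in Hi.
        destruct (Nat.lt_ge_cases i (length w)).
        -- rewrite app_nth1; auto.
        -- assert (i = length w) by lia; subst. rewrite nth_middle; auto.
      * intros Hc. specialize (Hc (length w)). rewrite nth_middle, E in Hc.
        discriminate Hc. rewrite length_app; simpl; lia.
    + rewrite (cyl_ind_1 (w ++ [false])), (cyl_ind_0 (w ++ [true])); [lra| |].
      * intros Hc. specialize (Hc (length w)). rewrite nth_middle, E in Hc.
        discriminate Hc. rewrite length_app; simpl; lia.
      * intros i Hi. rewrite length_app in Hi; simpl in Hi.
        destruct (Nat.lt_ge_cases i (length w)).
        -- rewrite app_nth1; auto.
        -- assert (i = length w) by lia; subst. rewrite nth_middle; auto.
  - rewrite !cyl_ind_0; [lra| | |auto]; intros Hc; apply Hx; eapply in_cyl_prefix; eauto.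
Qed.

Lemma cyl_ind_nil x : cyl_ind [] x = 1.
Proof. reflexivity. Qed.

Definition lc (d : nat) (g : Sigma -> R) := forall x y, agree d x y -> g x = g y.

Lemma lc_cont d g : lc d g -> continuous_S g.
Proof.
  intros L x eps He; exists d; intros y A. rewrite (L x y A), Rminus_diag, Rabs_R0; auto.
Qed.

Lemma cont_mul_lc f h d : continuous_S f -> lc d h -> (forall x, Rabs (h x) <= 1) ->
  continuous_S (fun x => f x * h x).
Proof.
  intros Cf L B x eps He. destruct (Cf x eps He) as [N HN]. exists (Nat.max N d).
  intros y A. rewrite (L y x). 2:{ intros i Hi; symmetry; apply A; lia. }
  replace (f y * h x - f x * h x) with ((f y - f x) * h x) by ring.
  rewrite Rabs_mult. specialize (B x).
  assert (Rabs (f y - f x) < eps) by (apply HN; eapply agree_mono; [|apply A]; lia).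
  pose proof (Rabs_pos (h x)); pose proof (Rabs_pos (f y - f x)); nra.
Qed.

Lemma cyl_lc w : lc (length w) (cyl_ind w).
Proof. intros x y A; apply cyl_ind_agree; auto. Qed.

Lemma cyl_abs w x : Rabs (cyl_ind w x) <= 1.
Proof. pose proof (cyl_ind_01 w x). rewrite Rabs_right; lra. Qed.


Definition lsum (f : word -> R) (l : list word) := fold_right Rplus 0 (map f l).

Lemma lsum_app f l1 l2 : lsum f (l1 ++ l2) = lsum f l1 + lsum f l2.
Proof. unfold lsum; induction l1; simpl; [lra| rewrite IHl1; lra]. Qed.
Lemma lsum_map f g l : lsum f (map g l) = lsum (fun v => f (g v)) l.
Proof. unfold lsum; rewrite map_map; auto. Qed.
Lemma lsum_ext f g l : (forall v, In v l -> f v = g v) -> lsum f l = lsum g l.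
Proof. unfold lsum; intros E; f_equal; apply map_ext_in; auto. Qed.
Lemma lsum_plus f g l : lsum (fun v => f v + g v) l = lsum f l + lsum g l.
Proof. unfold lsum; induction l; simpl; lra. Qed.
Lemma lsum_scal c f l : lsum (fun v => c * f v) l = c * lsum f l.
Proof. unfold lsum; induction l; simpl; lra. Qed.
Lemma lsum_le f g l : (forall v, f v <= g v) -> lsum f l <= lsum g l.
Proof. unfold lsum; intros E; induction l; simpl; [lra| specialize (E a); lra]. Qed.

Lemma words_len n v : In v (words n) -> length v = n.
Proof.
  revert v; induction n; simpl; intros v Hv.
  - destruct Hv as [<-|[]]; auto.
  - apply in_app_or in Hv as [Hv|Hv]; apply in_map_iff in Hv as [u [<- Hu]]; simpl; f_equal; auto.
Qed.

Lemma lsum_words_snoc n f :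
  lsum f (words (S n)) = lsum (fun v => f (v ++ [false]) + f (v ++ [true])) (words n).
Proof.
  revert f; induction n; intros f.
  - unfold lsum; simpl; lra.
  - change (words (S (S n))) with (map (cons false) (words (S n)) ++ map (cons true) (words (S n))).
    change (words (S n)) with (map (cons false) (words n) ++ map (cons true) (words n)) at 3.
    rewrite !lsum_app, !lsum_map, !IHn. simpl. auto.
Qed.

Lemma ext_cons c v : ext (c :: v) = scons c (ext v).
Proof. extensionality i; destruct i; reflexivity. Qed.

Lemma ext_snoc_agree v b : agree (length v) (ext (v ++ [b])) (ext v).
Proof. intros i Hi; unfold ext; apply app_nth1; auto. Qed.

Lemma riemann_lsum m g n : riemann_sum m g n = lsum (fun w => g (ext w) * m w) (words n).
Proof. reflexivity. Qed.

Lemma lsum_cyl w f : lsum (fun v => cyl_ind w (ext v) * f v) (words (length w)) = f w.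
Proof.
  revert f; induction w as [|b w IH]; intros f.
  - unfold lsum; simpl. rewrite cyl_ind_nil; lra.
  - simpl length. change (words (S (length w))) with (map (cons false) (words (length w)) ++ map (cons true) (words (length w))).
    rewrite lsum_app, !lsum_map.
    rewrite (lsum_ext _ (fun v => (if Bool.eqb false b then cyl_ind w (ext v) else 0) * f (false :: v))).
    2:{ intros v _; rewrite ext_cons, cyl_ind_scons; auto. }
    rewrite (lsum_ext (fun v => cyl_ind (b :: w) (ext (true :: v)) * f (true :: v)) (fun v => (if Bool.eqb true b then cyl_ind w (ext v) else 0) * f (true :: v))).
    2:{ intros v _; rewrite ext_cons, cyl_ind_scons; auto. }
    destruct b; simpl.
    + rewrite (lsum_ext _ (fun v => 0 * 0)) by (intros; ring).
      rewrite (IH (fun v => f (true :: v))). rewrite (lsum_scal 0). lra.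
    + rewrite (lsum_ext (fun v => 0 * f (true :: v)) (fun v => 0 * 0)) by (intros; ring).
      rewrite (IH (fun v => f (false :: v))). rewrite (lsum_scal 0). lra.
Qed.

Section Integral.
Variable m : word -> R.
Hypothesis hm : prob_on_cyl m.

Lemma riemann_lc_step d g n : lc d g -> (d <= n)%nat -> riemann_sum m g (S n) = riemann_sum m g n.
Proof.
  intros L Hd. rewrite !riemann_lsum, lsum_words_snoc. apply lsum_ext. intros v Hv.
  apply words_len in Hv.
  destruct hm as [_ [_ Hc]]. rewrite (Hc v).
  rewrite (L (ext (v ++ [false])) (ext v)), (L (ext (v ++ [true])) (ext v)); [ring| |];
  (eapply agree_mono; [|apply ext_snoc_agree]; lia).
Qed.

Lemma is_integral_lc d g : lc d g -> is_integral m g (riemann_sum m g d).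
Proof.
  intros L eps He; exists d; intros n Hn. 
  assert (E : riemann_sum m g n = riemann_sum m g d).
  { induction Hn; auto. rewrite riemann_lc_step with (d := d); auto. }
  unfold R_dist; rewrite E, Rminus_diag, Rabs_R0; auto.
Qed.

Lemma is_integral_cyl w : is_integral m (cyl_ind w) (m w).
Proof.
  pose proof (is_integral_lc _ _ (cyl_lc w)) as Hi. 
  rewrite riemann_lsum, lsum_cyl in Hi. auto.
Qed.

Lemma is_integral_ext g h I : (forall x, g x = h x) -> is_integral m g I -> is_integral m h I.
Proof.
  intros E Hi. unfold is_integral. eapply Un_cv_ext; [|apply Hi].
  intros n; rewrite !riemann_lsum; apply lsum_ext; intros; rewrite E; auto.
Qed.

Lemma is_integral_unique g I J : is_integral m g I -> is_integral m g J -> I = J.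
Proof. apply UL_sequence. Qed.

Lemma is_integral_scal c g I : is_integral m g I -> is_integral m (fun x => c * g x) (c * I).
Proof.
  intros Hi. unfold is_integral. eapply Un_cv_ext; [|apply Un_cv_scal, Hi].
  intros n; rewrite !riemann_lsum, <- lsum_scal; apply lsum_ext; intros; ring.
Qed.

Lemma is_integral_plus g h I J : is_integral m g I -> is_integral m h J ->
  is_integral m (fun x => g x + h x) (I + J).
Proof.
  intros Hi Hj. unfold is_integral. eapply Un_cv_ext; [|apply CV_plus; [apply Hi|apply Hj]].
  intros n; rewrite !riemann_lsum, <- lsum_plus; apply lsum_ext; intros; ring.
Qed.

Lemma is_integral_le g h I J : (forall x, g x <= h x) -> is_integral m g I -> is_integral m h J -> I <= J.
Proof.
  intros E Hi Hj. eapply Rle_cv_lim; [|apply Hi|apply Hj].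
  intros n; rewrite !riemann_lsum; apply lsum_le; intros v.
  destruct hm as [_ [Hp _]]; apply Rmult_le_compat_r; auto.
Qed.

End Integral.

Section Cluster.
Variable s : nat -> Sigma.
Definition InfP (n : nat) (z : Sigma) := forall M, exists N, (M <= N)%nat /\ agree n z (s N).

Fixpoint zs (n : nat) : Sigma :=
  match n with
  | O => fun _ => false
  | S k => let z0 := fun i => if Nat.eqb i k then false else zs k i in
           if excluded_middle_informative (InfP (S k) z0) then z0
           else fun i => if Nat.eqb i k then true else zs k i
  end.

Lemma zs_inf n : InfP n (zs n).
Proof.
  induction n.
  - intros M; exists M; split; auto; intros i Hi; lia.
  - simpl. destruct (excluded_middle_informative _) as [Hi|Hi]; auto.
    intros M. apply not_all_ex_not in Hi as [M0 HM0].
    destruct (IHn (Nat.max M M0)) as [N [HN Ha]]. exists N; split; [lia|].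
    destruct (s N n) eqn:E.
    + intros i Hi. destruct (Nat.eqb_spec i n); subst; auto. apply Ha; lia.
    + exfalso; apply HM0. exists N; split; [lia|].
      intros i Hi. destruct (Nat.eqb_spec i n); subst; auto. apply Ha; lia.
Qed.

Lemma zs_stable i k : (i < k)%nat -> zs (S k) i = zs k i.
Proof.
  intros Hik; simpl. destruct (excluded_middle_informative _);
  destruct (Nat.eqb_spec i k); auto; lia.
Qed.

Lemma zs_stable2 i n : (i < n)%nat -> zs n i = zs (S i) i.
Proof.
  intros H; induction H; auto. rewrite zs_stable; auto; lia.
Qed.

Lemma cluster : exists z, forall n, InfP n z.
Proof.
  exists (fun i => zs (S i) i). intros n M. destruct (zs_inf n M) as [N [HN Ha]].
  exists N; split; auto. intros i Hi. rewrite <- Ha; auto. symmetry; apply zs_stable2; auto.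
Qed.
End Cluster.

Lemma extreme_max f w Bd : continuous_S f -> (forall x, f x <= Bd) ->
  exists x0, in_cyl w x0 /\ forall y, in_cyl w y -> f y <= f x0.
Proof.
  intros Cf Bf.
  set (E := fun r => exists y, in_cyl w y /\ r = f y).
  assert (Eb : bound E) by (exists Bd; intros r [y [_ ->]]; auto).
  assert (Ene : exists r, E r) by (exists (f (papp w (fun _ => false))); exists (papp w (fun _ => false)); split; auto; apply in_cyl_app).
  destruct (completeness E Eb Ene) as [Sup [HSu HSl]].
  assert (Ex : forall n : nat, exists y, in_cyl w y /\ Sup - / INR (S n) < f y).
  { intros n. apply NNPP; intros Hn.
    assert (Hub : is_upper_bound E (Sup - / INR (S n))).
    { intros r [y [Hy ->]]. apply Rnot_lt_le; intros Hlt; apply Hn; exists y; auto. }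
    specialize (HSl _ Hub). assert (0 < / INR (S n)) by (apply Rinv_0_lt_compat, lt_0_INR; lia). lra. }
  set (s := fun n => proj1_sig (constructive_indefinite_description _ (Ex n))).
  assert (Hs : forall n, in_cyl w (s n) /\ Sup - / INR (S n) < f (s n)).
  { intros n; unfold s; destruct (constructive_indefinite_description _ _); auto. }
  destruct (cluster s) as [z Hz].
  assert (Hzw : in_cyl w z).
  { destruct (Hz (length w) O) as [N [_ HN]]. eapply in_cyl_agree; [|apply (proj1 (Hs N))].
    intros i Hi; symmetry; auto. }
  exists z; split; auto.
  assert (HzS : Sup <= f z).
  { apply Rnot_lt_le; intros Hlt. set (eps := (Sup - f z) / 2).
    assert (He : 0 < eps) by (unfold eps; lra).
    destruct (Cf z eps He) as [N0 HN0].
    destruct (INR_unbounded (/ eps)) as [n0 Hn0].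
    destruct (Hz N0 n0) as [N [HN Ha]].
    specialize (HN0 _ Ha). destruct (Hs N) as [_ HsN].
    assert (/ INR (S N) < eps).
    { assert (0 < INR n0) by (apply (Rle_lt_trans _ (/ eps)); [left; apply Rinv_0_lt_compat; auto|auto]).
      assert (INR n0 <= INR (S N)) by (apply le_INR; lia).
      apply (Rmult_lt_reg_l (INR (S N))); [lra|]. rewrite Rinv_r by lra.
      apply (Rmult_lt_reg_l (/ eps)); [apply Rinv_0_lt_compat; auto|].
      replace (/ eps * (INR (S N) * eps)) with (INR (S N)) by (field; lra). lra. }
    apply Rabs_def2 in HN0. unfold eps in *. lra. }
  intros y Hy. apply (Rle_trans _ Sup); auto. apply HSu. exists y; auto.
Qed.


Lemma extreme_min f w Bd : continuous_S f -> (forall x, Bd <= f x) ->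
  exists x0, in_cyl w x0 /\ forall y, in_cyl w y -> f x0 <= f y.
Proof.
  intros Cf Bf. destruct (extreme_max (fun x => - f x) w (- Bd)) as [x0 [H1 H2]].
  - intros x eps He. destruct (Cf x eps He) as [N HN]; exists N; intros y A.
    specialize (HN y A). rewrite <- Rabs_Ropp. replace (- (- f y - - f x)) with (f y - f x) by ring; auto.
  - intros x; specialize (Bf x); lra.
  - exists x0; split; auto. intros y Hy; specialize (H2 y Hy); lra.
Qed.

Lemma pow_le_one x n : 0 <= x <= 1 -> x ^ n <= 1.
Proof. intros Hx; induction n; simpl; [lra| nra]. Qed.

Lemma in_cyl_papp_app w u y : in_cyl u y -> in_cyl (w ++ u) (papp w y).
Proof. induction w; simpl; intros Hu; auto. apply in_cyl_scons; auto. Qed.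

Lemma in_cyl2 b c x : in_cyl [b; c] x <-> x O = b /\ x 1%nat = c.
Proof.
  split.
  - intros Hx; split; [apply (Hx O)| apply (Hx 1%nat)]; simpl; lia.
  - intros [A B] i Hi; simpl in Hi. destruct i as [|[|i]]; simpl; auto; lia.
Qed.

Lemma decomp1 x : x = papp [x O] (shiftn 1 x).
Proof. extensionality i; destruct i; reflexivity. Qed.

Lemma abs_lt_all a : (forall eps, 0 < eps -> Rabs a < eps) -> a = 0.
Proof.
  intros Hl. destruct (Req_dec a 0) as [|Hn]; auto.
  specialize (Hl (Rabs a) (Rabs_pos_lt _ Hn)); lra.
Qed.

Lemma exp_le a b : a <= b -> exp a <= exp b.
Proof. intros [Hl| Heq]; [left; apply exp_increasing; auto| subst; lra]. Qed.

Section Main.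
Variables (H : Sigma -> R) (H0 H1 : nat -> R) (beta lam : R) (Phi : Sigma -> R) (nu mu : word -> R).
Hypotheses (hH : reduced_double_well H H0 H1) (hbeta : 0 < beta)
  (hPhi : is_eigenfunction beta H lam Phi) (hnu : is_eigenmeasure beta H lam nu)
  (hmu : is_gibbs_cyl nu Phi mu).

Definition Hc (c : bool) := if c then H1 else H0.
Definition E c k := exp (- beta * Hc c k).

Lemma E_pos c k : 0 < E c k.
Proof. apply exp_pos. Qed.

Lemma Phi_pos x : 0 < Phi x.
Proof. destruct hPhi as [_ [P _]]; auto. Qed.
Lemma Phi_le1 x : Phi x <= 1.
Proof. destruct hPhi as [_ [_ [P _]]]; auto. Qed.
Lemma Phi_cont : continuous_S Phi.
Proof. destruct hPhi as [P _]; auto. Qed.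
Lemma eig x : transfer beta H Phi x = lam * Phi x.
Proof. destruct hPhi as [_ [_ [_ [_ P]]]]; auto. Qed.

Lemma H_eq x : x O = x 1%nat -> H x = 0.
Proof. destruct hH as [_ [_ [_ [P _]]]]; auto. Qed.

Lemma H_block b n x : (1 <= n)%nat -> in_cyl (b :: repeat (negb b) n ++ [b]) x -> H x = Hc b n.
Proof.
  destruct hH as [_ [_ [_ [_ [P0 [P1 _]]]]]]. intros Hn Hx; destruct b; simpl in *.
  - apply P1; auto.
  - apply P0; auto.
Qed.

Lemma H1_bounded : exists C, forall n, H1 (S n) <= C.
Proof.
  destruct hH as [_ [_ [_ [_ [_ [_ [_ [_ [_ [d [Hd _]]]]]]]]]]].
  exists (H1 1%nat + d 1%nat). intros n. destruct (Hd 1%nat) as [Hu _].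
  assert (Ha : Rabs (H1 1%nat - H1 (1 + n)%nat) <= d 1%nat) by (apply Hu; exists n; auto).
  simpl in Ha. unfold Rabs in Ha; destruct (Rcase_abs _) in Ha; lra.
Qed.

Lemma lam_pos : 0 < lam.
Proof.
  pose proof (eig (fun _ => false)) as E0. unfold transfer in E0.
  pose proof (Phi_pos (fun _ => false)).
  assert (0 < lam * Phi (fun _ => false)).
  { rewrite <- E0. pose proof (exp_pos (- beta * H (scons false (fun _ => false)))).
    pose proof (exp_pos (- beta * H (scons true (fun _ => false)))).
    pose proof (Phi_pos (scons false (fun _ => false))). pose proof (Phi_pos (scons true (fun _ => false))).
    nra. }
  nra.
Qed.

Lemma eig_b b x : exp (- beta * H (scons b x)) * Phi (scons b x) + exp (- beta * H (scons (negb b) x)) * Phi (scons (negb b) x) = lam * Phi x.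
Proof. rewrite <- eig; unfold transfer; destruct b; simpl; lra. Qed.

Definition Pm b m y := papp (repeat b m) y.
Definition Qm b k y := papp (negb b :: repeat b k) y.

Lemma Qm_cyl b k y : (1 <= k)%nat -> in_cyl [negb b; b] (Qm b k y).
Proof. intros Hk; apply in_cyl2; destruct k; [lia|]; simpl; auto. Qed.

Lemma one_step b m y : (1 <= m)%nat -> y O = negb b ->
  lam * Phi (Pm b m y) = Phi (Pm b (S m) y) + E (negb b) m * Phi (Qm b m y).
Proof.
  intros Hm Hy. rewrite <- (eig_b b). f_equal.
  - change (scons b (Pm b m y)) with (Pm b (S m) y). rewrite H_eq; [rewrite Rmult_0_r, exp_0; ring|].
    destruct m; [lia|]; reflexivity.
  - change (scons (negb b) (Pm b m y)) with (Qm b m y). unfold E; f_equal; f_equal; f_equal.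
    apply H_block; auto. rewrite Bool.negb_involutive. unfold Qm.
    apply in_cyl_scons; split; auto. apply in_cyl_papp_app.
    intros i Hi; simpl in Hi; destruct i; [simpl; auto|lia].
Qed.

Lemma fin_exp b m y j : (1 <= m)%nat -> y O = negb b ->
  Phi (Pm b m y) = fsum (fun i => / lam ^ S i * E (negb b) (m + i) * Phi (Qm b (m + i) y)) j
                   + / lam ^ j * Phi (Pm b (m + j) y).
Proof.
  intros Hm Hy. pose proof lam_pos. induction j.
  - simpl fsum. simpl pow. replace (m + 0)%nat with m by lia. field.
  - rewrite IHj. simpl fsum. rewrite Nat.add_succ_r.
    pose proof (one_step b (m + j) y ltac:(lia) Hy) as Hs.
    assert (Hp : Phi (Pm b (m + j) y) = / lam * (Phi (Pm b (S (m + j)) y) + E (negb b) (m + j) * Phi (Qm b (m + j) y))).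
    { rewrite <- Hs. field; lra. }
    rewrite Hp. simpl pow. assert (0 < lam ^ j) by (apply pow_lt; auto). field. split; lra.
Qed.

Definition xmin0 : Sigma := proj1_sig (constructive_indefinite_description _ (extreme_min Phi [] 0 Phi_cont (fun x => Rlt_le _ _ (Phi_pos x)))).
Definition c0 := Phi xmin0.
Lemma c0_pos : 0 < c0.
Proof. apply Phi_pos. Qed.
Lemma c0_le x : c0 <= Phi x.
Proof.
  unfold c0, xmin0. destruct (constructive_indefinite_description _ _) as [x0 [Hx0 Hx]]; simpl.
  apply Hx. intros i Hi; simpl in Hi; lia.
Qed.

Lemma bound_partial b m j : (1 <= m)%nat ->
  fsum (fun i => / lam ^ S i * E (negb b) (m + i)) j <= / c0.
Proof.
  intros Hm. set (y := fun _ : nat => negb b).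
  pose proof (fin_exp b m y j Hm eq_refl) as Hf.
  pose proof lam_pos. pose proof c0_pos.
  assert (Hr : 0 <= / lam ^ j * Phi (Pm b (m + j) y)).
  { apply Rmult_le_pos; [left; apply Rinv_0_lt_compat, pow_lt; auto| left; apply Phi_pos]. }
  assert (Hs : c0 * fsum (fun i => / lam ^ S i * E (negb b) (m + i)) j <= 1).
  { rewrite <- fsum_scal. pose proof (Phi_le1 (Pm b m y)) as Hle.
    eapply Rle_trans; [|apply Hle]. rewrite Hf.
    assert (fsum (fun i => c0 * (/ lam ^ S i * E (negb b) (m + i))) j <= fsum (fun i => / lam ^ S i * E (negb b) (m + i) * Phi (Qm b (m + i) y)) j).
    { apply fsum_le; intros i. rewrite Rmult_comm. apply Rmult_le_compat_l; [|apply c0_le].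
      apply Rmult_le_pos; [left; apply Rinv_0_lt_compat, pow_lt; auto| left; apply E_pos]. }
    lra. }
  apply (Rmult_le_reg_l c0); auto. rewrite Rinv_r; lra.
Qed.

Lemma lam_gt1 : 1 < lam.
Proof.
  apply Rnot_le_lt; intros Hl. pose proof lam_pos. pose proof c0_pos.
  destruct H1_bounded as [C HC].
  set (d := exp (- beta * C)). assert (Hd : 0 < d) by apply exp_pos.
  assert (Ht : forall i, d <= / lam ^ S i * E (negb false) (1 + i)).
  { intros i. rewrite <- (Rmult_1_l d). apply Rmult_le_compat.
    - lra. - lra.
    - assert (0 < lam ^ S i) by (apply pow_lt; auto).
      assert (lam ^ S i <= 1) by (apply pow_le_one; lra).
      apply (Rmult_le_reg_l (lam ^ S i)); auto. rewrite Rinv_r by lra. lra.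
    - unfold d, E; simpl. apply exp_le. specialize (HC i). nra. }
  destruct (INR_unbounded (/ c0 / d)) as [n Hn].
  pose proof (fsum_lin _ _ n Ht) as Hlin. pose proof (bound_partial false 1 n (le_n 1)) as Hb.
  assert (INR n * d > / c0) by (apply (Rmult_gt_reg_l (/ d)); [apply Rinv_0_lt_compat; auto|];
    replace (/ d * (INR n * d)) with (INR n) by (field; lra); unfold Rdiv in Hn; lra).
  lra.
Qed.

Lemma inv_pow_pos n : 0 < / lam ^ n.
Proof. apply Rinv_0_lt_compat, pow_lt, lam_pos. Qed.

Lemma inf_exp b m y : (1 <= m)%nat -> y O = negb b ->
  ser (fun i => / lam ^ S i * E (negb b) (m + i) * Phi (Qm b (m + i) y)) (Phi (Pm b m y)).
Proof.
  intros Hm Hy. unfold ser.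
  apply (Un_cv_ext (fun j => Phi (Pm b m y) - / lam ^ j * Phi (Pm b (m + j) y))).
  - intros j; rewrite (fin_exp b m y j Hm Hy) at 1; ring.
  - assert (Hsq : Un_cv (fun j => / lam ^ j * Phi (Pm b (m + j) y)) 0).
    { apply (Un_cv_squeeze0 _ (fun j => / lam ^ j)); [|apply pow_inv_cv0, lam_gt1].
      intros j; pose proof (inv_pow_pos j); pose proof (Phi_pos (Pm b (m + j) y)); pose proof (Phi_le1 (Pm b (m + j) y)).
      split; nra. }
    pose proof (CV_minus _ _ _ _ (Un_cv_const (Phi (Pm b m y))) Hsq) as Hc.
    rewrite Rminus_0_r in Hc; exact Hc.
Qed.

Lemma fs_exists c m : (1 <= m)%nat -> exists l, ser (fun i => / lam ^ S i * E c (m + i)) l.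
Proof.
  intros Hm. apply (ser_bounded _ (/ c0)).
  - intros i; pose proof (inv_pow_pos (S i)); pose proof (E_pos c (m + i)); nra.
  - intros n. pose proof (bound_partial (negb c) m n Hm) as Hb. rewrite Bool.negb_involutive in Hb; auto.
Qed.

Definition Fc (c : bool) : R := proj1_sig (constructive_indefinite_description _ (fs_exists c 1 (le_n 1))).
Lemma Fc_ser c : ser (fun i => / lam ^ S i * E c (1 + i)) (Fc c).
Proof. unfold Fc; destruct (constructive_indefinite_description _ _); auto. Qed.
Lemma w_pos c m i : 0 < / lam ^ S i * E c (m + i).
Proof. pose proof (inv_pow_pos (S i)); pose proof (E_pos c (m + i)); nra. Qed.
Lemma Fc_pos c : 0 < Fc c.
Proof. apply (ser_pos _ _ (fun i => Rlt_le _ _ (w_pos c 1 i)) (w_pos c 1 0) (Fc_ser c)). Qed.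

Lemma cont_Phi_opp_bound x : 0 <= Phi x.
Proof. left; apply Phi_pos. Qed.

Definition xM (b : bool) : Sigma := proj1_sig (constructive_indefinite_description _ (extreme_max Phi [b; negb b] 1 Phi_cont Phi_le1)).
Definition xm (b : bool) : Sigma := proj1_sig (constructive_indefinite_description _ (extreme_min Phi [b; negb b] 0 Phi_cont cont_Phi_opp_bound)).
Definition Smax b := Phi (xM b).
Definition Imin b := Phi (xm b).
Lemma xM_spec b : in_cyl [b; negb b] (xM b) /\ forall y, in_cyl [b; negb b] y -> Phi y <= Smax b.
Proof. unfold Smax, xM; destruct (constructive_indefinite_description _ _); auto. Qed.
Lemma xm_spec b : in_cyl [b; negb b] (xm b) /\ forall y, in_cyl [b; negb b] y -> Imin b <= Phi y.
Proof. unfold Imin, xm; destruct (constructive_indefinite_description _ _); auto. Qed.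

Lemma Qm_cyl' b k y : (1 <= k)%nat -> in_cyl [negb b; negb (negb b)] (Qm b k y).
Proof. rewrite Bool.negb_involutive; apply Qm_cyl. Qed.

Lemma rel_upper b y : y O = negb b -> Phi (papp [b] y) <= Fc (negb b) * Smax (negb b).
Proof.
  intros Hy. pose proof (inf_exp b 1 y (le_n 1) Hy) as A.
  pose proof (ser_scal (Smax (negb b)) _ _ (Fc_ser (negb b))) as B.
  rewrite Rmult_comm. eapply ser_le; [|apply A|apply B]. intros i; cbv beta.
  rewrite (Rmult_comm (Smax _)). apply Rmult_le_compat_l; [left; apply w_pos|].
  apply xM_spec, Qm_cyl'; lia.
Qed.

Lemma rel_lower b y : y O = negb b -> Fc (negb b) * Imin (negb b) <= Phi (papp [b] y).
Proof.
  intros Hy. pose proof (inf_exp b 1 y (le_n 1) Hy) as A.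
  pose proof (ser_scal (Imin (negb b)) _ _ (Fc_ser (negb b))) as B.
  rewrite Rmult_comm. eapply ser_le; [|apply B|apply A]. intros i; cbv beta.
  rewrite (Rmult_comm (Imin _)). apply Rmult_le_compat_l; [left; apply w_pos|].
  apply xm_spec, Qm_cyl'; lia.
Qed.

Lemma cyl2_decomp b x : in_cyl [b; negb b] x -> x = papp [b] (shiftn 1 x) /\ shiftn 1 x O = negb b.
Proof.
  intros Hx; apply in_cyl2 in Hx as [A B]. split; [rewrite <- A; apply decomp1| apply B].
Qed.

Lemma Smax_le b : Smax b <= Fc (negb b) * Smax (negb b).
Proof.
  destruct (xM_spec b) as [Hc _]. destruct (cyl2_decomp _ _ Hc) as [E1 E2].
  unfold Smax at 1. rewrite E1. apply rel_upper; auto.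
Qed.
Lemma Imin_ge b : Fc (negb b) * Imin (negb b) <= Imin b.
Proof.
  destruct (xm_spec b) as [Hc _]. destruct (cyl2_decomp _ _ Hc) as [E1 E2].
  unfold Imin at 2. rewrite E1. apply rel_lower; auto.
Qed.
Lemma Smax_pos b : 0 < Smax b.
Proof. apply Phi_pos. Qed.
Lemma Imin_pos b : 0 < Imin b.
Proof. apply Phi_pos. Qed.

Lemma Fprod : Fc false * Fc true = 1.
Proof.
  pose proof (Smax_le false) as A; pose proof (Smax_le true) as B; simpl in A, B.
  pose proof (Imin_ge false) as C; pose proof (Imin_ge true) as D; simpl in C, D.
  pose proof (Fc_pos false); pose proof (Fc_pos true).
  pose proof (Smax_pos false); pose proof (Imin_pos false).
  assert (Smax false <= Fc true * Fc false * Smax false).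
  { eapply Rle_trans; [apply A|]. rewrite Rmult_assoc. apply Rmult_le_compat_l; lra. }
  assert (Fc true * Fc false * Imin false <= Imin false).
  { eapply Rle_trans; [|apply C]. rewrite Rmult_assoc. apply Rmult_le_compat_l; lra. }
  nra.
Qed.

Lemma Smax_eq b : Smax b = Fc (negb b) * Smax (negb b).
Proof.
  pose proof (Smax_le b) as A; pose proof (Smax_le (negb b)) as B. rewrite Bool.negb_involutive in B.
  assert (Hf : Fc b * Fc (negb b) = 1) by (destruct b; simpl; rewrite <- Fprod; ring).
  pose proof (Fc_pos (negb b)).
  assert (Hx : Fc (negb b) * Smax (negb b) <= Fc (negb b) * (Fc b * Smax b)) by (apply Rmult_le_compat_l; lra).
  replace (Fc (negb b) * (Fc b * Smax b)) with ((Fc b * Fc (negb b)) * Smax b) in Hx by ring.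
  rewrite Hf in Hx. lra.
Qed.
Lemma Imin_eq b : Imin b = Fc (negb b) * Imin (negb b).
Proof.
  pose proof (Imin_ge b) as A; pose proof (Imin_ge (negb b)) as B. rewrite Bool.negb_involutive in B.
  assert (Hf : Fc b * Fc (negb b) = 1) by (destruct b; simpl; rewrite <- Fprod; ring).
  pose proof (Fc_pos (negb b)).
  assert (Hx : Fc (negb b) * (Fc b * Imin b) <= Fc (negb b) * Imin (negb b)) by (apply Rmult_le_compat_l; lra).
  replace (Fc (negb b) * (Fc b * Imin b)) with ((Fc b * Fc (negb b)) * Imin b) in Hx by ring.
  rewrite Hf in Hx. lra.
Qed.

Lemma prop_max b y : y O = negb b -> Phi (papp [b] y) = Smax b ->
  forall i, Phi (Qm b (S i) y) = Smax (negb b).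
Proof.
  intros Hy HS. pose proof (inf_exp b 1 y (le_n 1) Hy) as A.
  pose proof (ser_scal (Smax (negb b)) _ _ (Fc_ser (negb b))) as B.
  pose proof (ser_minus _ _ _ _ B A) as D. change (Pm b 1 y) with (papp [b] y) in D.
  rewrite HS, (Smax_eq b) in D. replace (Smax (negb b) * Fc (negb b) - Fc (negb b) * Smax (negb b)) with 0 in D by ring.
  assert (Nn : forall i, 0 <= Smax (negb b) * (/ lam ^ S i * E (negb b) (1 + i)) - / lam ^ S i * E (negb b) (1 + i) * Phi (Qm b (1 + i) y)).
  { intros i. pose proof (w_pos (negb b) 1 i).
    assert (Phi (Qm b (1 + i) y) <= Smax (negb b)) by (apply xM_spec, Qm_cyl'; lia); nra. }
  pose proof (ser_zero_terms _ Nn D) as Z.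
  intros i; specialize (Z i); cbv beta in Z. pose proof (w_pos (negb b) 1 i).
  assert (Hz : / lam ^ S i * E (negb b) (1 + i) * (Smax (negb b) - Phi (Qm b (1 + i) y)) = 0) by (rewrite <- Z; ring).
  apply Rmult_integral in Hz as [Hz|Hz]; [lra|]. simpl in Hz; lra.
Qed.

Lemma prop_min b y : y O = negb b -> Phi (papp [b] y) = Imin b ->
  forall i, Phi (Qm b (S i) y) = Imin (negb b).
Proof.
  intros Hy HS. pose proof (inf_exp b 1 y (le_n 1) Hy) as A.
  pose proof (ser_scal (Imin (negb b)) _ _ (Fc_ser (negb b))) as B.
  pose proof (ser_minus _ _ _ _ A B) as D. change (Pm b 1 y) with (papp [b] y) in D.
  rewrite HS, (Imin_eq b) in D. replace (Fc (negb b) * Imin (negb b) - Imin (negb b) * Fc (negb b)) with 0 in D by ring.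
  assert (Nn : forall i, 0 <= / lam ^ S i * E (negb b) (1 + i) * Phi (Qm b (1 + i) y) - Imin (negb b) * (/ lam ^ S i * E (negb b) (1 + i))).
  { intros i. pose proof (w_pos (negb b) 1 i).
    assert (Imin (negb b) <= Phi (Qm b (1 + i) y)) by (apply xm_spec, Qm_cyl'; lia); nra. }
  pose proof (ser_zero_terms _ Nn D) as Z.
  intros i; specialize (Z i); cbv beta in Z. pose proof (w_pos (negb b) 1 i).
  assert (Hz : / lam ^ S i * E (negb b) (1 + i) * (Phi (Qm b (1 + i) y) - Imin (negb b)) = 0) by (rewrite <- Z; ring).
  apply Rmult_integral in Hz as [Hz|Hz]; [lra|]. simpl in Hz; lra.
Qed.

Section Closure.
Variable V : bool -> R.
Hypothesis propV : forall b y, y O = negb b -> Phi (papp [b] y) = V b ->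
  forall i, Phi (Qm b (S i) y) = V (negb b).

Definition QV x := exists b m y, (1 <= m)%nat /\ y O = negb b /\ x = papp (repeat b m) y /\ Phi (papp [b] y) = V b.

Lemma QV_scons c x : QV x -> QV (scons c x).
Proof.
  intros [b [m [y [Hm [Hy [-> HV]]]]]].
  destruct (Bool.bool_dec c b) as [<-|Hcb].
  - exists c, (S m), y; repeat split; auto.
  - assert (c = negb b) by (destruct b, c; simpl; congruence || tauto). subst c.
    exists (negb b), 1%nat, (papp (repeat b m) y). repeat split; auto.
    + destruct m; [lia|]; simpl; rewrite Bool.negb_involutive; auto.
    + destruct m as [|m]; [lia|]. pose proof (propV b y Hy HV m) as P. unfold Qm in P. auto.
Qed.

Lemma QV_papp p x : QV x -> QV (papp p x).
Proof. induction p; simpl; auto. intros; apply QV_scons; auto. Qed.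

Lemma QV_value b x : QV x -> x O = b -> x 1%nat = negb b -> Phi x = V b.
Proof.
  intros [b' [m [y [Hm [Hy [-> HV]]]]]] E0 E1.
  destruct m as [|[|m]]; [lia| |].
  - simpl in E0; subst; auto.
  - simpl in E0, E1. subst. destruct b; discriminate.
Qed.

Lemma const_V b : (exists xs, QV xs) -> forall x, x O = b -> x 1%nat = negb b -> Phi x = V b.
Proof.
  intros [xs Hxs] x E0 E1. 
  assert (Ha : forall eps, 0 < eps -> Rabs (V b - Phi x) < eps).
  { intros eps He. destruct (Phi_cont x eps He) as [N HN].
    set (z := papp (pref (Nat.max N 2) x) xs).
    assert (Az : agree (Nat.max N 2) x z) by apply agree_pref.
    assert (Vz : Phi z = V b).
    { apply QV_value; [apply QV_papp; auto| |].
      - rewrite <- (Az O); auto; lia.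
      - rewrite <- (Az 1%nat); auto; lia. }
    rewrite <- Vz. apply HN. eapply agree_mono; [|apply Az]; lia. }
  apply abs_lt_all in Ha; lra.
Qed.
End Closure.

Lemma QV_start V b x : in_cyl [b; negb b] x -> Phi x = V b -> QV V x.
Proof.
  intros Hc HV. destruct (cyl2_decomp _ _ Hc) as [E1 E2].
  exists b, 1%nat, (shiftn 1 x). repeat split; auto. rewrite <- E1; auto.
Qed.

Definition K := Smax.
Lemma Phi_const b x : x O = b -> x 1%nat = negb b -> Phi x = K b.
Proof.
  intros E0 E1. unfold K. apply (const_V Smax prop_max b); auto.
  exists (xM b). apply (QV_start Smax b); [apply xM_spec| auto].
Qed.
Lemma Phi_const_cyl b x : in_cyl [b; negb b] x -> Phi x = K b.
Proof. intros Hx; apply in_cyl2 in Hx as [A B]; apply Phi_const; auto. Qed.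
Lemma K_eq b : K b = Fc (negb b) * K (negb b).
Proof. apply Smax_eq. Qed.
Lemma K_pos b : 0 < K b.
Proof. apply Smax_pos. Qed.

Lemma Tex c m : (1 <= m)%nat -> exists T, ser (fun j => / lam ^ (m + j) * E c (m + j)) T.
Proof.
  intros Hm. destruct (fs_exists c m Hm) as [l Hl]. exists (/ lam ^ (m - 1) * l).
  pose proof (ser_scal (/ lam ^ (m - 1)) _ _ Hl) as A. eapply ser_ext; [|apply A].
  intros i; cbv beta. assert (Hpw : lam ^ (m + i) = lam ^ (m - 1) * lam ^ S i) by (rewrite <- pow_add; f_equal; lia).
  rewrite Hpw. pose proof lam_pos. assert (0 < lam ^ (m-1)) by (apply pow_lt; auto).
  assert (0 < lam ^ S i) by (apply pow_lt; auto). field; lra.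
Qed.

Lemma Phi_block b m y T : (1 <= m)%nat -> y O = negb b ->
  ser (fun j => / lam ^ (m + j) * E (negb b) (m + j)) T ->
  Phi (Pm b m y) = K (negb b) * lam ^ (m - 1) * T.
Proof.
  intros Hm Hy HT. pose proof (inf_exp b m y Hm Hy) as A.
  pose proof (ser_scal (K (negb b) * lam ^ (m - 1)) _ _ HT) as B.
  eapply ser_unique; [apply A|]. eapply ser_ext; [|apply B]. intros i; cbv beta.
  rewrite (Phi_const_cyl (negb b)) by (apply Qm_cyl'; lia).
  assert (Hpw : lam ^ (m + i) = lam ^ (m - 1) * lam ^ S i) by (rewrite <- pow_add; f_equal; lia).
  rewrite Hpw. pose proof lam_pos. assert (0 < lam ^ (m-1)) by (apply pow_lt; auto).
  assert (0 < lam ^ S i) by (apply pow_lt; auto). field; lra.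
Qed.

Lemma nu_prob : prob_on_cyl nu.
Proof. destruct hnu; auto. Qed.
Lemma nu_eig g : continuous_S g -> forall I, is_integral nu g I -> is_integral nu (transfer beta H g) (lam * I).
Proof. destruct hnu; auto. Qed.
Lemma nu_nn w : 0 <= nu w.
Proof. destruct nu_prob as [_ [P _]]; auto. Qed.
Lemma nu_snoc w : nu w = nu (w ++ [false]) + nu (w ++ [true]).
Proof. destruct nu_prob as [_ [_ P]]; auto. Qed.
Lemma nu_nil : nu [] = 1.
Proof. destruct nu_prob as [P _]; auto. Qed.

Definition Zg : R := proj1_sig (constructive_indefinite_description _ hmu).
Lemma Zg_spec : is_integral nu Phi Zg /\ forall w, exists Iw, is_integral nu (fun x => Phi x * cyl_ind w x) Iw /\ mu w = Iw / Zg.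
Proof. unfold Zg; destruct (constructive_indefinite_description _ _); auto. Qed.
Definition Ig (w : word) : R := proj1_sig (constructive_indefinite_description _ (proj2 Zg_spec w)).
Lemma Ig_spec w : is_integral nu (fun x => Phi x * cyl_ind w x) (Ig w) /\ mu w = Ig w / Zg.
Proof. unfold Ig; destruct (constructive_indefinite_description _ _); auto. Qed.
Lemma Ig_int w : is_integral nu (fun x => Phi x * cyl_ind w x) (Ig w).
Proof. apply Ig_spec. Qed.
Lemma mu_eq w : mu w = Ig w / Zg.
Proof. apply Ig_spec. Qed.
Lemma Ig_unique w J : is_integral nu (fun x => Phi x * cyl_ind w x) J -> Ig w = J.
Proof. intros HJ; eapply is_integral_unique; [apply Ig_int|apply HJ]. Qed.

Lemma Zg_eq : Zg = Ig [].
Proof.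
  symmetry; apply Ig_unique. eapply is_integral_ext; [|apply Zg_spec].
  intros x; simpl; rewrite cyl_ind_nil; ring.
Qed.

Lemma Ig_snoc w : Ig w = Ig (w ++ [false]) + Ig (w ++ [true]).
Proof.
  apply Ig_unique. eapply is_integral_ext; [|apply is_integral_plus; apply Ig_int].
  intros x; cbv beta; rewrite (cyl_ind_snoc w x); ring.
Qed.

Lemma Ig_bounds w : 0 <= Ig w <= nu w.
Proof.
  split.
  - apply (is_integral_le nu nu_prob (fun _ => 0) (fun x => Phi x * cyl_ind w x)).
    + intros x; pose proof (Phi_pos x); pose proof (cyl_ind_01 w x); nra.
    + pose proof (is_integral_scal nu 0 (cyl_ind w) _ (is_integral_cyl nu nu_prob w)) as T0.
      rewrite Rmult_0_l in T0. eapply is_integral_ext; [|apply T0]. intros; cbv beta; ring.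
    + apply Ig_int.
  - eapply (is_integral_le nu nu_prob _ (cyl_ind w)); [|apply Ig_int| apply is_integral_cyl, nu_prob].
    intros x; pose proof (Phi_le1 x); pose proof (cyl_ind_01 w x); nra.
Qed.

Lemma Ig_const w k : (forall x, in_cyl w x -> Phi x = k) -> Ig w = k * nu w.
Proof.
  intros Hk. apply Ig_unique.
  eapply is_integral_ext; [|apply (is_integral_scal nu k _ _ (is_integral_cyl nu nu_prob w))].
  intros x; cbv beta. destruct (classic (in_cyl w x)) as [Hx|Hx].
  - rewrite Hk; auto.
  - rewrite cyl_ind_0; auto; ring.
Qed.

Lemma Ig_shift w : Ig (false :: w) + Ig (true :: w) = Ig w.
Proof.
  set (g := fun x => Phi x * cyl_ind w (shiftn 1 x)).
  assert (Hg : is_integral nu g (Ig (false :: w) + Ig (true :: w))).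
  { eapply is_integral_ext; [|apply is_integral_plus; apply Ig_int].
    intros x; unfold g; cbv beta.
    assert (Ex : x = scons (x O) (shiftn 1 x)) by (extensionality i; destruct i; reflexivity).
    assert (C0 : forall c, cyl_ind (c :: w) x = if Bool.eqb (x O) c then cyl_ind w (shiftn 1 x) else 0).
    { intros c. rewrite Ex at 1. apply cyl_ind_scons. }
    rewrite !C0. destruct (x O); simpl; ring. }
  assert (Cg : continuous_S g).
  { apply (cont_mul_lc _ _ (S (length w))); [apply Phi_cont| |intros; apply cyl_abs].
    intros x y A. apply cyl_ind_agree. intros i Hi; apply A; lia. }
  pose proof (nu_eig g Cg _ Hg) as Ht.
  assert (Et : forall x, transfer beta H g x = lam * (Phi x * cyl_ind w x)).
  { intros x. replace (lam * (Phi x * cyl_ind w x)) with ((lam * Phi x) * cyl_ind w x) by ring. rewrite <- eig. unfold transfer, g.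
    assert (E1 : forall c, shiftn 1 (scons c x) = x) by (intros c; extensionality i; reflexivity).
    rewrite !E1. ring. }
  pose proof (is_integral_ext _ _ _ _ Et Ht) as Ht2.
  pose proof (is_integral_scal nu lam _ _ (Ig_int w)) as Ht3.
  pose proof (is_integral_unique _ _ _ _ Ht2 Ht3) as Eq.
  pose proof lam_pos. apply (Rmult_eq_reg_l lam); lra.
Qed.

Lemma nu_step b w h : (forall x, in_cyl w x -> H (scons b x) = h) -> lam * nu (b :: w) = exp (- beta * h) * nu w.
Proof.
  intros Hh.
  pose proof (nu_eig _ (lc_cont _ _ (cyl_lc (b :: w))) _ (is_integral_cyl nu nu_prob (b :: w))) as Ht.
  assert (Et : forall x, transfer beta H (cyl_ind (b :: w)) x = exp (- beta * h) * cyl_ind w x).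
  { intros x. unfold transfer. rewrite !cyl_ind_scons.
    destruct (classic (in_cyl w x)) as [Hx|Hx].
    - rewrite <- (Hh x Hx). destruct b; simpl; ring.
    - rewrite (cyl_ind_0 w x Hx). destruct b; simpl; ring. }
  pose proof (is_integral_ext _ _ _ _ Et Ht) as Ht2.
  pose proof (is_integral_scal nu (exp (- beta * h)) _ _ (is_integral_cyl nu nu_prob w)) as Ht3.
  eapply is_integral_unique; eauto.
Qed.

Lemma nu_bb b u : nu (b :: b :: u) = / lam * nu (b :: u).
Proof.
  pose proof lam_pos.
  assert (lam * nu (b :: b :: u) = exp (- beta * 0) * nu (b :: u)).
  { apply nu_step. intros x Hx. apply H_eq. simpl. symmetry; apply (Hx O); simpl; lia. }
  rewrite Rmult_0_r, exp_0, Rmult_1_l in H3. rewrite <- H3. field; lra.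
Qed.

Lemma nu_block b n u : (1 <= n)%nat ->
  nu (b :: repeat (negb b) n ++ b :: u) = / lam * E b n * nu (repeat (negb b) n ++ b :: u).
Proof.
  intros Hn. pose proof lam_pos.
  assert (Hs : lam * nu (b :: repeat (negb b) n ++ b :: u) = exp (- beta * Hc b n) * nu (repeat (negb b) n ++ b :: u)).
  { apply nu_step. intros x Hx. apply H_block; auto.
    apply in_cyl_scons; split; auto.
    replace (repeat (negb b) n ++ b :: u) with ((repeat (negb b) n ++ [b]) ++ u) in Hx by (rewrite <- app_assoc; auto).
    eapply in_cyl_prefix; eauto. }
  unfold E. rewrite Rmult_assoc, <- Hs. field; lra.
Qed.

Lemma nu_rep b n u : nu (repeat b (S n) ++ u) = / lam ^ n * nu (b :: u).
Proof.
  induction n.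
  - simpl; rewrite Rinv_1; ring.
  - change (repeat b (S (S n)) ++ u) with (b :: b :: (repeat b n ++ u)). rewrite nu_bb.
    change (b :: repeat b n ++ u) with (repeat b (S n) ++ u). rewrite IHn.
    simpl pow. pose proof lam_pos. assert (0 < lam ^ n) by (apply pow_lt; auto). field; lra.
Qed.

Lemma nu_bnb b : nu [b; negb b] = (1 - / lam) * nu [b].
Proof.
  pose proof (nu_snoc [b]) as Hs. pose proof (nu_bb b []) as Hb.
  destruct b; simpl in *; lra.
Qed.

Lemma Ig_b_nb b : Ig [b; negb b] = K b * nu [b; negb b].
Proof. apply Ig_const. intros x Hx; apply Phi_const_cyl; auto. Qed.

Lemma Ig_01_10 : Ig [false; true] = Ig [true; false].
Proof.
  pose proof (Ig_snoc [false]) as A. pose proof (Ig_shift [false]) as B. simpl in A. lra.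
Qed.

Lemma nu_pos b : 0 < nu [b].
Proof.
  assert (Hl : 0 < 1 - / lam) by (pose proof lam_gt1; assert (/ lam < 1) by (apply (Rmult_lt_reg_l lam); [lra|]; rewrite Rinv_r; lra); lra).
  pose proof Ig_01_10 as E01. pose proof (Ig_b_nb false) as K0; pose proof (Ig_b_nb true) as K1; simpl in K0, K1.
  rewrite K0, K1 in E01.
  pose proof (nu_bnb false) as A; pose proof (nu_bnb true) as B; simpl in A, B.
  pose proof (nu_snoc []) as C; simpl in C; rewrite nu_nil in C.
  pose proof (K_pos false); pose proof (K_pos true).
  pose proof (nu_nn [false]); pose proof (nu_nn [true]).
  assert (P0 : 0 < nu [false]).
  { destruct (Rle_lt_or_eq_dec 0 (nu [false])) as [|Hz]; auto. exfalso.
    assert (Z1 : nu [false; true] = 0) by (rewrite A, <- Hz; ring).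
    assert (Z2 : K true * nu [true; false] = 0) by (rewrite <- E01, Z1; ring).
    apply Rmult_integral in Z2 as [Z2|Z2]; [lra|].
    rewrite Z2 in B. symmetry in B. apply Rmult_integral in B as [B|B]; lra. }
  assert (P1 : 0 < nu [true]).
  { destruct (Rle_lt_or_eq_dec 0 (nu [true])) as [|Hz]; auto. exfalso.
    assert (Z1 : nu [true; false] = 0) by (rewrite B, <- Hz; ring).
    assert (Z2 : K false * nu [false; true] = 0) by (rewrite E01, Z1; ring).
    apply Rmult_integral in Z2 as [Z2|Z2]; [lra|].
    rewrite Z2 in A. symmetry in A. apply Rmult_integral in A as [A'|A']; lra. }
  destruct b; auto.
Qed.

Lemma nu_bnb_pos b : 0 < nu [b; negb b].
Proof.
  rewrite nu_bnb. pose proof (nu_pos b). pose proof lam_gt1.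
  assert (/ lam < 1) by (apply (Rmult_lt_reg_l lam); [lra|]; rewrite Rinv_r; lra). nra.
Qed.

Lemma Ig_bnb_pos b : 0 < Ig [b; negb b].
Proof. rewrite Ig_b_nb. pose proof (K_pos b); pose proof (nu_bnb_pos b); nra. Qed.

Lemma Zg_pos : 0 < Zg.
Proof.
  rewrite Zg_eq. pose proof (Ig_snoc []) as A; simpl in A.
  pose proof (Ig_snoc [false]) as B; simpl in B.
  pose proof (Ig_bnb_pos false). pose proof (Ig_bounds [true]). pose proof (Ig_bounds [false; false]).
  simpl in *. lra.
Qed.

Lemma Ig_part4 b n : (1 <= n)%nat -> Ig (b :: repeat (negb b) n ++ [b]) = K b * E b n * / lam ^ n * nu [negb b; b].
Proof.
  intros Hn. rewrite (Ig_const _ (K b)).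
  2:{ intros x Hx. apply Phi_const. - apply (Hx O); simpl; lia.
      - rewrite (Hx 1%nat) by (simpl; rewrite length_app, repeat_length; simpl; lia).
        destruct n; [lia|]; simpl; auto. }
  rewrite nu_block by auto. destruct n as [|n]; [lia|]. rewrite nu_rep.
  simpl pow. pose proof lam_pos. assert (0 < lam ^ n) by (apply pow_lt; auto). field; lra.
Qed.

Lemma Ig_part2 b n T : (1 <= n)%nat -> ser (fun j => / lam ^ (n + j) * E (negb b) (n + j)) T ->
  Ig (repeat b n ++ [negb b]) = K (negb b) * T * nu [b; negb b].
Proof.
  intros Hn HT. rewrite (Ig_const _ (K (negb b) * lam ^ (n - 1) * T)).
  2:{ intros x Hx. rewrite (in_cyl_decomp (repeat b n) x); [|eapply in_cyl_prefix; eauto].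
      rewrite repeat_length. apply Phi_block; auto. unfold shiftn. rewrite Nat.add_0_r.
      rewrite (Hx n) by (rewrite length_app, repeat_length; simpl; lia).
      rewrite app_nth2 by (rewrite repeat_length; lia). rewrite repeat_length, Nat.sub_diag; auto. }
  destruct n as [|n]; [lia|]. rewrite nu_rep. simpl (S n - 1)%nat. rewrite Nat.sub_0_r.
  pose proof lam_pos. assert (0 < lam ^ n) by (apply pow_lt; auto). field; lra.
Qed.

Lemma repeat_snoc (b : bool) n : repeat b n ++ [b] = repeat b (S n).
Proof. induction n; simpl; auto; rewrite IHn; auto. Qed.

Lemma Ig_b_sum b : ser (fun n => Ig (repeat b (S n) ++ [negb b])) (Ig [b]).
Proof.
  assert (Id : forall N, Ig [b] = fsum (fun n => Ig (repeat b (S n) ++ [negb b])) N + Ig (repeat b (S N))).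
  { induction N; [simpl; ring|]. rewrite IHN. simpl fsum.
    rewrite (Ig_snoc (repeat b (S N))). rewrite <- (repeat_snoc b (S N)).
    destruct b; simpl; ring. }
  unfold ser. apply (Un_cv_ext (fun N => Ig [b] - Ig (repeat b (S N)))).
  - intros N; rewrite (Id N) at 1; ring.
  - assert (Hz : Un_cv (fun N => Ig (repeat b (S N))) 0).
    { apply (Un_cv_squeeze0 _ (fun N => / lam ^ N * nu [b])).
      - intros N; pose proof (Ig_bounds (repeat b (S N))) as Hb.
        pose proof (nu_rep b N []) as Hr. rewrite app_nil_r in Hr. rewrite Hr in Hb. auto.
      - replace 0 with (0 * nu [b]) by ring. apply CV_mult; [apply pow_inv_cv0, lam_gt1| apply Un_cv_const]. }
    pose proof (CV_minus _ _ _ _ (Un_cv_const (Ig [b])) Hz) as Hc. rewrite Rminus_0_r in Hc; exact Hc.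
Qed.

Definition Tf (c : bool) (n : nat) : R :=
  proj1_sig (constructive_indefinite_description _ (Tex c (S n) (le_n_S _ _ (Nat.le_0_l n)))).
Lemma Tf_ser c n : ser (fun j => / lam ^ (S n + j) * E c (S n + j)) (Tf c n).
Proof. unfold Tf; destruct (constructive_indefinite_description _ _); auto. Qed.

Lemma tilde_exists b : exists tF,
  ser (fun k => INR (S k) * (/ lam ^ S k * E (negb b) (S k))) tF /\
  Ig [b] = K (negb b) * nu [b; negb b] * tF.
Proof.
  set (C := K (negb b) * nu [b; negb b]).
  assert (HC : 0 < C) by (unfold C; pose proof (K_pos (negb b)); pose proof (nu_bnb_pos b); nra).
  pose proof (Ig_b_sum b) as A.
  assert (A2 : ser (fun n => C * Tf (negb b) n) (Ig [b])).
  { eapply ser_ext; [|apply A]. intros n; cbv beta. rewrite (Ig_part2 b (S n) (Tf (negb b) n)); [unfold C; ring|lia|].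
    apply Tf_ser. }
  pose proof (ser_scal (/ C) _ _ A2) as A3.
  assert (A4 : ser (fun n => Tf (negb b) n) (/ C * Ig [b])).
  { eapply ser_ext; [|apply A3]. intros n; cbv beta. field; lra. }
  exists (/ C * Ig [b]). split; [|field; lra].
  apply (double_sum (fun k => / lam ^ S k * E (negb b) (S k)) (Tf (negb b))); auto.
  - intros k; left; apply (w_pos (negb b) (S O) k).
  - intros n. eapply ser_ext; [|apply Tf_ser]. intros j; reflexivity.
Qed.

Lemma tF_pos b tF : ser (fun k => INR (S k) * (/ lam ^ S k * E (negb b) (S k))) tF -> 0 < tF.
Proof.
  intros Hs. eapply ser_pos; [|  |apply Hs].
  - intros k; pose proof (w_pos (negb b) 1 k); pose proof (pos_INR (S k)); simpl in *; nra.
  - pose proof (w_pos (negb b) 1 0). simpl in *. lra.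
Qed.

Lemma main_sec :
  exists F0 F1 tF0 tF1 : R,
    infinite_sum (fun k => Fterm beta lam H0 (S k)) F0 /\
    infinite_sum (fun k => Fterm beta lam H1 (S k)) F1 /\
    infinite_sum (fun k => tFterm beta lam H0 (S k)) tF0 /\
    infinite_sum (fun k => tFterm beta lam H1 (S k)) tF1 /\
    mu [false; true] = mu [true; false] /\
    (forall n, (1 <= n)%nat ->
       exists T, infinite_sum (fun j => Fterm beta lam H1 (n + j)%nat) T /\
         mu (repeat false n ++ [true]) / mu [false; true] = T * F0) /\
    mu [false] / mu [false; true] = tF1 / F1 /\
    (forall n, (1 <= n)%nat ->
       exists T, infinite_sum (fun j => Fterm beta lam H0 (n + j)%nat) T /\
         mu (repeat true n ++ [false]) / mu [true; false] = T * F1) /\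
    mu [true] / mu [true; false] = tF0 / F0 /\
    (forall n, (1 <= n)%nat ->
       mu (false :: repeat true n ++ [false]) / mu [true; false]
         = exp (- beta * H0 n) * F1 / lam ^ n /\
       mu (true :: repeat false n ++ [true]) / mu [false; true]
         = exp (- beta * H1 n) * F0 / lam ^ n) /\
    mu [false] / mu [true] = F0 / F1 * (tF1 / tF0).
Proof.
  destruct (tilde_exists true) as [tF0 [HtF0 Ig1]]. destruct (tilde_exists false) as [tF1 [HtF1 Ig0]].
  simpl negb in *.
  pose proof (tF_pos true tF0 HtF0) as tF0p. pose proof (tF_pos false tF1 HtF1) as tF1p.
  pose proof Zg_pos as Zp. pose proof (K_pos false) as K0p. pose proof (K_pos true) as K1p.
  pose proof (Fc_pos false) as F0p. pose proof (Fc_pos true) as F1p.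
  pose proof (nu_bnb_pos false) as n01; pose proof (nu_bnb_pos true) as n10; simpl negb in n01, n10.
  pose proof (K_eq true) as Kt; simpl negb in Kt.
  pose proof (K_eq false) as Kf; simpl negb in Kf.
  assert (Finv : Fc false = / Fc true).
  { apply (Rmult_eq_reg_l (Fc true)); [|lra]. rewrite Rinv_r by lra. rewrite <- Fprod; ring. }
  pose proof (Ig_b_nb false) as I01; pose proof (Ig_b_nb true) as I10; simpl negb in I01, I10.
  pose proof Ig_01_10 as E01. pose proof lam_pos as lp.
  exists (Fc false), (Fc true), tF0, tF1.
  split; [apply ser_infinite; eapply ser_ext; [|apply (Fc_ser false)]; intros; reflexivity|].
  split; [apply ser_infinite; eapply ser_ext; [|apply (Fc_ser true)]; intros; reflexivity|].
  split; [apply ser_infinite; eapply ser_ext; [|apply HtF0]; intros; unfold tFterm, E, Hc; ring|].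
  split; [apply ser_infinite; eapply ser_ext; [|apply HtF1]; intros; unfold tFterm, E, Hc; ring|].
  split; [rewrite !mu_eq, E01; auto|].
  split.
  { intros n Hn. destruct (Tex true n Hn) as [T HT]. exists T; split.
    - apply ser_infinite; eapply ser_ext; [|apply HT]; intros; reflexivity.
    - rewrite !mu_eq. pose proof (Ig_part2 false n T Hn HT) as P; simpl negb in P. rewrite P, I01, Kt.
      field; repeat split; lra. }
  split.
  { rewrite !mu_eq, Ig0, I01, Kt, Finv. field; repeat split; lra. }
  split.
  { intros n Hn. destruct (Tex false n Hn) as [T HT]. exists T; split.
    - apply ser_infinite; eapply ser_ext; [|apply HT]; intros; reflexivity.
    - rewrite !mu_eq. pose proof (Ig_part2 true n T Hn HT) as P; simpl negb in P. rewrite P, I10, Kf.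
      field; repeat split; lra. }
  split.
  { rewrite !mu_eq, Ig1, I10, Kf, Finv. field; repeat split; lra. }
  split.
  { intros n Hn. pose proof (pow_lt _ n lp). split.
    - rewrite !mu_eq. pose proof (Ig_part4 false n Hn) as P; simpl negb in P. rewrite P, I10, Kf.
      unfold E, Hc. field; repeat split; lra.
    - rewrite !mu_eq. pose proof (Ig_part4 true n Hn) as P; simpl negb in P. rewrite P, I01, Kt.
      unfold E, Hc. field; repeat split; lra. }
  { rewrite !mu_eq, Ig0, Ig1.
    assert (Hn : nu [true; false] = K false * nu [false; true] / K true).
    { rewrite I01, I10 in E01. rewrite E01. field; lra. }
    rewrite Hn, Kt, Finv. field; repeat split; try lra. }
Qed.

End Main.

Theorem corollary3p6
  (H : Sigma -> R) (H0 H1 : nat -> R) (beta lam : R)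
  (Phi : Sigma -> R) (nu mu : word -> R)
  (hH : reduced_double_well H H0 H1) (hbeta : 0 < beta)
  (hPhi : is_eigenfunction beta H lam Phi)
  (hnu : is_eigenmeasure beta H lam nu)
  (hmu : is_gibbs_cyl nu Phi mu) :
  exists F0 F1 tF0 tF1 : R,
    infinite_sum (fun k => Fterm beta lam H0 (S k)) F0 /\
    infinite_sum (fun k => Fterm beta lam H1 (S k)) F1 /\
    infinite_sum (fun k => tFterm beta lam H0 (S k)) tF0 /\
    infinite_sum (fun k => tFterm beta lam H1 (S k)) tF1 /\
    (* 1 *)
    mu [false; true] = mu [true; false] /\
    (* 2 *)
    (forall n, (1 <= n)%nat ->
       exists T, infinite_sum (fun j => Fterm beta lam H1 (n + j)%nat) T /\
         mu (repeat false n ++ [true]) / mu [false; true] = T * F0) /\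
    mu [false] / mu [false; true] = tF1 / F1 /\
    (* 3 *)
    (forall n, (1 <= n)%nat ->
       exists T, infinite_sum (fun j => Fterm beta lam H0 (n + j)%nat) T /\
         mu (repeat true n ++ [false]) / mu [true; false] = T * F1) /\
    mu [true] / mu [true; false] = tF0 / F0 /\
    (* 4 *)
    (forall n, (1 <= n)%nat ->
       mu (false :: repeat true n ++ [false]) / mu [true; false]
         = exp (- beta * H0 n) * F1 / lam ^ n /\
       mu (true :: repeat false n ++ [true]) / mu [false; true]
         = exp (- beta * H1 n) * F0 / lam ^ n) /\
    (* 5 *)
    mu [false] / mu [true] = F0 / F1 * (tF1 / tF0).
Proof.
  exact (main_sec H H0 H1 beta lam Phi nu mu hH hbeta hPhi hnu hmu).
Qed.
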